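(* For every compact set $K\subset\mathbb C^2\setminus C(p)$ there exists $\eta>0$ such that $K\subset f_a(V_-)$ for all $a$ with $0<|a|<\eta$. In particular every point of $\mathbb C^2\setminus C(p)$ lies in $f_a(V_-)$ for all sufficiently small $a\neq0$.
   Context: $p(x)=x^2+c$, $f_a(x,y)=(p(x)-ay,\,x)$, $C(p)=\{(x,y):p(y)=x\}$. Here $\alpha>0$ is fixed and $V_-=\{(x,y):|y|>|x|,\ |y|>\alpha\}$. *)

(* Defs.v *)
From Stdlib Require Import Reals List.
Open Scope R_scope.

(* The complex plane Cx = R x R (real part, imaginary part). *)
Definition Cx : Type := (R * R)%type.
Definition Cadd (z w : Cx) : Cx := (fst z + fst w, snd z + snd w).
Definition Csub (z w : Cx) : Cx := (fst z - fst w, snd z - snd w).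
Definition Cmul (z w : Cx) : Cx :=
  (fst z * fst w - snd z * snd w, fst z * snd w + snd z * fst w).
Definition Cmod (z : Cx) : R := sqrt (fst z ^ 2 + snd z ^ 2).

Definition C2 : Type := (Cx * Cx)%type.

Definition dist2 (u v : C2) : R :=
  sqrt (Cmod (Csub (fst u) (fst v)) ^ 2 + Cmod (Csub (snd u) (snd v)) ^ 2).

Definition open2 (U : C2 -> Prop) : Prop :=
  forall u, U u -> exists r, 0 < r /\ forall v, dist2 u v < r -> U v.

Definition compact2 (K : C2 -> Prop) : Prop :=
  forall (I : Type) (U : I -> C2 -> Prop),
    (forall i, open2 (U i)) ->
    (forall z, K z -> exists i, U i z) ->
    exists l : list I, forall z, K z -> exists i, In i l /\ U i z.

Definition p (c x : Cx) : Cx := Cadd (Cmul x x) c.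

Definition f (c a : Cx) (z : C2) : C2 :=
  (Csub (p c (fst z)) (Cmul a (snd z)), fst z).

Definition Cp (c : Cx) (z : C2) : Prop := p c (snd z) = fst z.

Definition Vminus (alpha : R) (z : C2) : Prop :=
  Cmod (snd z) > Cmod (fst z) /\ Cmod (snd z) > alpha.

Definition in_image_fV (c a : Cx) (alpha : R) (z : C2) : Prop :=
  exists w, Vminus alpha w /\ f c a w = z.

(* Main.v *)
Require Import Defs.
From Stdlib Require Import Reals List Lra Lia Psatz.
Open Scope R_scope.

Lemma sqrt_tri (x1 x2 y1 y2 : R) :
  sqrt ((x1+y1)^2+(x2+y2)^2) <= sqrt (x1^2+x2^2) + sqrt (y1^2+y2^2).
Proof.
  assert (HA := sqrt_sqrt (x1^2+x2^2) ltac:(nra)).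
  assert (HB := sqrt_sqrt (y1^2+y2^2) ltac:(nra)).
  assert (HA0 := sqrt_pos (x1^2+x2^2)).
  assert (HB0 := sqrt_pos (y1^2+y2^2)).
  set (A := sqrt (x1^2+x2^2)) in *. set (B := sqrt (y1^2+y2^2)) in *.
  rewrite <- (sqrt_square (A+B)) by lra.
  apply sqrt_le_1_alt.
  assert (Hd : x1*y1+x2*y2 <= A*B).
  { destruct (Rle_dec (x1*y1+x2*y2) 0). nra.
    assert (Hsq : (x1*y1+x2*y2)^2 <= (A*B)^2).
    { replace ((A*B)^2) with ((A*A)*(B*B)) by ring. rewrite HA, HB.
      assert (E : (x1^2+x2^2)*(y1^2+y2^2) = (x1*y1+x2*y2)^2 + (x1*y2-x2*y1)^2) by ring.
      rewrite E. pose proof (pow2_ge_0 (x1*y2-x2*y1)). lra. }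
    assert (0 <= A*B) by (apply Rmult_le_pos; lra).
    destruct (Rle_dec (x1*y1+x2*y2) (A*B)) as [|Hn]; [assumption|].
    exfalso. assert (A*B < x1*y1+x2*y2) by lra.
    assert ((A*B)^2 < (x1*y1+x2*y2)^2) by (simpl; nra). lra. }
  nra.
Qed.

Lemma Cmod_pos (z : Cx) : 0 <= Cmod z.
Proof. apply sqrt_pos. Qed.

Lemma Cmod_mul z w : Cmod (Cmul z w) = Cmod z * Cmod w.
Proof.
  destruct z as [a b], w as [x y]. unfold Cmod, Cmul; cbn [fst snd].
  rewrite <- sqrt_mult by nra. f_equal. ring.
Qed.

Lemma Cmod_sub_le u v : Cmod (Csub u v) <= Cmod u + Cmod v.
Proof.
  destruct u as [u1 u2], v as [v1 v2]. unfold Cmod, Csub; cbn [fst snd].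
  pose proof (sqrt_tri u1 u2 (-v1) (-v2)) as H.
  replace (u1 + - v1) with (u1 - v1) in H by ring.
  replace (u2 + - v2) with (u2 - v2) in H by ring.
  replace ((-v1)^2 + (-v2)^2) with (v1^2+v2^2) in H by ring. exact H.
Qed.

Lemma Cmod_add_le u v : Cmod (Cadd u v) <= Cmod u + Cmod v.
Proof.
  destruct u as [u1 u2], v as [v1 v2]. unfold Cmod, Cadd; cbn [fst snd].
  apply sqrt_tri.
Qed.

Lemma Cmod_le_sub z w : Cmod w <= Cmod z + Cmod (Csub z w).
Proof.
  destruct z as [z1 z2], w as [w1 w2]. unfold Cmod, Csub; cbn [fst snd].
  pose proof (sqrt_tri z1 z2 (-(z1-w1)) (-(z2-w2))) as H.
  replace (z1 + -(z1-w1)) with w1 in H by ring.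
  replace (z2 + -(z2-w2)) with w2 in H by ring.
  replace ((-(z1-w1))^2 + (-(z2-w2))^2) with ((z1-w1)^2+(z2-w2)^2) in H by ring.
  exact H.
Qed.

Lemma Cmod_sub_sym z w : Cmod (Csub z w) = Cmod (Csub w z).
Proof.
  destruct z as [z1 z2], w as [w1 w2]. unfold Cmod, Csub; cbn [fst snd].
  f_equal. ring.
Qed.

Lemma Cmod_sub_tri a b c : Cmod (Csub a c) <= Cmod (Csub a b) + Cmod (Csub b c).
Proof.
  destruct a as [a1 a2], b as [b1 b2], c as [c1 c2]. unfold Cmod, Csub; cbn [fst snd].
  pose proof (sqrt_tri (a1-b1) (a2-b2) (b1-c1) (b2-c2)) as H.
  replace (a1 - b1 + (b1 - c1)) with (a1-c1) in H by ring.
  replace (a2 - b2 + (b2 - c2)) with (a2-c2) in H by ring. exact H.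
Qed.

Lemma Cmod_sub_self z : Cmod (Csub z z) = 0.
Proof.
  destruct z as [z1 z2]. unfold Cmod, Csub; cbn [fst snd].
  replace ((z1-z1)^2+(z2-z2)^2) with 0 by ring. apply sqrt_0.
Qed.

Lemma dist2_self u : dist2 u u = 0.
Proof.
  unfold dist2. rewrite !Cmod_sub_self.
  replace (0^2+0^2) with 0 by ring. apply sqrt_0.
Qed.

Lemma dist2_fst u v : Cmod (Csub (fst u) (fst v)) <= dist2 u v.
Proof.
  unfold dist2. rewrite <- (sqrt_pow2 (Cmod (Csub (fst u) (fst v)))) at 1 by apply Cmod_pos.
  apply sqrt_le_1_alt. assert (H := pow2_ge_0 (Cmod (Csub (snd u) (snd v)))). lra.
Qed.

Lemma dist2_snd u v : Cmod (Csub (snd u) (snd v)) <= dist2 u v.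
Proof.
  unfold dist2. rewrite <- (sqrt_pow2 (Cmod (Csub (snd u) (snd v)))) at 1 by apply Cmod_pos.
  apply sqrt_le_1_alt. assert (H := pow2_ge_0 (Cmod (Csub (fst u) (fst v)))). lra.
Qed.

Lemma dist2_tri u v w : dist2 u w <= dist2 u v + dist2 v w.
Proof.
  unfold dist2.
  eapply Rle_trans; [apply sqrt_le_1_alt | apply sqrt_tri].
  pose proof (Cmod_sub_tri (fst u) (fst v) (fst w)).
  pose proof (Cmod_sub_tri (snd u) (snd v) (snd w)).
  pose proof (Cmod_pos (Csub (fst u) (fst w))).
  pose proof (Cmod_pos (Csub (snd u) (snd w))).
  nra.
Qed.

Lemma Cmod_nz_pos z : z <> (0,0) -> 0 < Cmod z.
Proof.
  destruct z as [x y]. intro H. unfold Cmod; cbn [fst snd].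
  apply sqrt_lt_R0.
  destruct (Req_dec x 0); destruct (Req_dec y 0); subst; try (exfalso; apply H; reflexivity); nra.
Qed.

Definition q (c : Cx) (z : C2) : Cx := Csub (p c (snd z)) (fst z).
Definition Good (c : Cx) (alpha : R) (n : nat) (z : C2) : Prop :=
  Cmod (q c z) * INR (S n) > Cmod (snd z) + alpha.

Lemma Good_mono c alpha n m z : (n <= m)%nat -> Good c alpha n z -> Good c alpha m z.
Proof.
  unfold Good. intros Hnm H.
  assert (Hle : INR (S n) <= INR (S m)) by (apply le_INR; lia).
  pose proof (Cmod_pos (q c z)). nra.
Qed.

Lemma key c alpha n z a : 0 < alpha -> Good c alpha n z -> 0 < Cmod a ->
  Cmod a < / INR (S n) -> in_image_fV c a alpha z.
Proof.
  intros Hal HG Ha Han. unfold Good in HG.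
  destruct z as [X Y]. cbn [snd] in HG.
  set (Q := q c (X,Y)) in *.
  destruct a as [a1 a2].
  assert (Hs : a1^2 + a2^2 <> 0).
  { intro E. unfold Cmod in Ha; cbn [fst snd] in Ha. rewrite E, sqrt_0 in Ha. lra. }
  set (y := Cmul Q (a1/(a1^2+a2^2), -a2/(a1^2+a2^2))).
  assert (Hay : Cmul (a1,a2) y = Q).
  { unfold y. destruct Q as [q1 q2]. unfold Cmul; cbn [fst snd]. f_equal; field; exact Hs. }
  assert (Hm : Cmod (a1,a2) * Cmod y = Cmod Q) by (rewrite <- Cmod_mul, Hay; reflexivity).
  assert (HSn : 0 < INR (S n)) by (apply lt_0_INR; lia).
  assert (Han' : Cmod (a1,a2) * INR (S n) < 1).
  { apply (Rmult_lt_compat_r (INR (S n))) in Han; auto.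
    rewrite Rinv_l in Han by lra. exact Han. }
  pose proof (Cmod_pos Y). pose proof (Cmod_pos y). pose proof (Cmod_pos Q).
  assert (HQ : 0 < Cmod Q) by nra.
  assert (Hy : 0 < Cmod y) by nra.
  assert (Hy2 : Cmod y > Cmod Q * INR (S n)).
  { rewrite <- Hm. nra. }
  exists (Y, y). split.
  - unfold Vminus; cbn [fst snd]. split; lra.
  - unfold Defs.f; cbn [fst snd]. rewrite Hay. unfold Q, q; cbn [fst snd].
    destruct (p c Y) as [p1 p2], X as [x1 x2]. unfold Csub; cbn [fst snd].
    f_equal; f_equal; ring.
Qed.

Lemma local c alpha z : 0 < alpha -> ~ Cp c z ->
  exists n r, 0 < r /\ forall w, dist2 z w < r -> Good c alpha n w.
Proof.
  intros Hal Hz. destruct z as [X Y].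
  assert (Hd : 0 < Cmod (q c (X,Y))).
  { apply Cmod_nz_pos. intro E. apply Hz. unfold Cp; cbn [fst snd].
    unfold q in E; cbn [fst snd] in E.
    destruct (p c Y) as [p1 p2], X as [x1 x2]. unfold Csub in E; cbn [fst snd] in E.
    injection E; intros. f_equal; lra. }
  set (d := Cmod (q c (X,Y))) in *.
  set (M := Cmod Y).
  assert (HM : 0 <= M) by apply Cmod_pos.
  destruct (INR_archimed (d/2) (M + 1 + alpha) ltac:(lra)) as [n Hn].
  set (r := Rmin 1 (d / (4*(M+1)))).
  assert (Hr1 : r <= 1) by apply Rmin_l.
  assert (Hr2 : r <= d / (4*(M+1))) by apply Rmin_r.
  assert (Hr0 : 0 < r).
  { unfold r. apply Rmin_glb_lt. lra. apply Rdiv_lt_0_compat; lra. }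
  exists n, r. split; [exact Hr0|].
  intros [Xw Yw] Hw.
  pose proof (dist2_fst (X,Y) (Xw,Yw)) as HX. pose proof (dist2_snd (X,Y) (Xw,Yw)) as HY.
  cbn [fst snd] in HX, HY.
  set (eX := Cmod (Csub X Xw)) in *. set (eY := Cmod (Csub Y Yw)) in *.
  assert (HeX : 0 <= eX) by apply Cmod_pos. assert (HeY : 0 <= eY) by apply Cmod_pos.
  assert (HYw : Cmod Yw <= M + eY) by apply Cmod_le_sub.
  assert (Hid : Csub (q c (Xw,Yw)) (q c (X,Y)) =
                Csub (Cmul (Csub Yw Y) (Cadd Yw Y)) (Csub Xw X)).
  { unfold q, p; cbn [fst snd]. destruct Xw, Yw, X, Y, c.
    unfold Csub, Cadd, Cmul; cbn [fst snd]. f_equal; ring. }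
  pose proof (Cmod_le_sub (q c (Xw,Yw)) (q c (X,Y))) as H1.
  rewrite Hid in H1.
  pose proof (Cmod_sub_le (Cmul (Csub Yw Y) (Cadd Yw Y)) (Csub Xw X)) as H2.
  rewrite Cmod_mul in H2.
  rewrite (Cmod_sub_sym Yw Y), (Cmod_sub_sym Xw X) in H2. fold eX eY in H2.
  pose proof (Cmod_add_le Yw Y) as H3. fold M in H3.
  pose proof (Cmod_pos (Cadd Yw Y)).
  set (dw := Cmod (q c (Xw,Yw))) in *.
  assert (HeYr : eY < r) by lra. assert (HeXr : eX < r) by lra.
  assert (Hc : Cmod (Cadd Yw Y) <= 2*M+1) by lra.
  assert (Hprod : eY * Cmod (Cadd Yw Y) <= r * (2*M+1)).
  { apply Rmult_le_compat; lra. }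
  assert (Hr3 : r * (4*(M+1)) <= d).
  { apply (Rmult_le_compat_r (4*(M+1))) in Hr2; [|lra].
    unfold Rdiv in Hr2. rewrite Rmult_assoc, Rinv_l in Hr2 by lra. lra. }
  fold d in H1.
  assert (Hdw : dw >= d/2).
  { assert (r * (2*M+1) + r = r * (4*(M+1)) / 2) by field. lra. }
  unfold Good; cbn [snd]. fold dw.
  assert (INR n <= INR (S n)) by (apply le_INR; lia).
  assert (0 <= INR n) by apply pos_INR.
  assert (INR n * (d/2) <= INR (S n) * dw).
  { apply Rmult_le_compat; lra. }
  lra.
Qed.

Lemma in_le_fold (l : list nat) i : In i l -> (i <= fold_right Nat.max 0%nat l)%nat.
Proof.
  induction l as [|x l IH]; simpl; [tauto|].
  intros [E|H]; [subst; lia|]. specialize (IH H). lia.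
Qed.

Theorem lemma4p9 (c : Cx) (alpha : R) (Halpha : 0 < alpha) :
  (forall K : C2 -> Prop,
      compact2 K ->
      (forall z, K z -> ~ Cp c z) ->
      exists eta, 0 < eta /\
        forall a : Cx, 0 < Cmod a -> Cmod a < eta ->
          forall z, K z -> in_image_fV c a alpha z)
  /\
  (forall z : C2, ~ Cp c z ->
      exists eta, 0 < eta /\
        forall a : Cx, 0 < Cmod a -> Cmod a < eta -> in_image_fV c a alpha z).
Proof.
  split.
  - intros K HK HKC.
    destruct (HK nat (fun n v => exists r, 0 < r /\ forall w, dist2 v w < r -> Good c alpha n w))
      as [l Hl].
    + intros n u [r [Hr H]]. exists r. split; [exact Hr|].
      intros v Hv. exists (r - dist2 u v). split; [lra|].
      intros w Hw. apply H. pose proof (dist2_tri u v w). lra.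
    + intros z Kz. destruct (local c alpha z Halpha (HKC z Kz)) as [n [r [Hr H]]].
      exists n, r. auto.
    + set (N := fold_right Nat.max 0%nat l).
      exists (/ INR (S N)). split.
      { apply Rinv_0_lt_compat, lt_0_INR; lia. }
      intros a Ha HaN z Kz.
      destruct (Hl z Kz) as [i [Hi [r [Hr H]]]].
      apply (key c alpha N z a Halpha); auto.
      apply (Good_mono c alpha i N); [apply in_le_fold; exact Hi|].
      apply H. rewrite dist2_self. exact Hr.
  - intros z Hz. destruct (local c alpha z Halpha Hz) as [n [r [Hr H]]].
    exists (/ INR (S n)). split.
    { apply Rinv_0_lt_compat, lt_0_INR; lia. }
    intros a Ha Han. apply (key c alpha n z a Halpha); auto.
    apply H. rewrite dist2_self. exact Hr.
Qed.
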